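(* Let $F$ be an infinite field, let $n>1$ be an integer, and let $p\in F[x]$ be a nonconstant polynomial. Then every matrix in $\mathrm{M}_n(F)$ can be expressed as a product of two elements of $p[\mathrm{M}_n(F),\mathrm{M}_n(F)]=\{p(AB)-p(BA)\mid A,B\in\mathrm{M}_n(F)\}$. *)

(* Defs.v *)
From mathcomp Require Import all_boot all_order all_algebra.
Set Implicit Arguments. Unset Strict Implicit. Unset Printing Implicit Defensive.
Import GRing.Theory.
Local Open Scope ring_scope.

Definition infinite_type (T : eqType) : Prop := ~ (exists s : seq T, forall x : T, x \in s).

Definition mx_peval (F : fieldType) (n : nat) (p : {poly F}) (A : 'M[F]_n) : 'M[F]_n :=
  \sum_(i < size p) p`_i *: iter i (mulmx A) (1%:M).

Definition in_p_commutators (F : fieldType) (n : nat) (p : {poly F}) (M : 'M[F]_n) : Prop :=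
  exists A B : 'M[F]_n, M = mx_peval p (A *m B) - mx_peval p (B *m A).

(* Main.v *)
Require Import Defs.
From mathcomp Require Import all_boot all_order all_algebra.
From mathcomp Require Import ring.
From mathcomp Require Import fingroup perm.
From Stdlib Require Import Classical.
Set Implicit Arguments. Unset Strict Implicit. Unset Printing Implicit Defensive.
Import GRing.Theory.
Local Open Scope ring_scope.

Section PartA.
Variable F : fieldType.

Definition conjb n (G Gi : 'M[F]_n) := G *m Gi = 1%:M /\ Gi *m G = 1%:M.

Lemma iter_conj n (G Gi A : 'M[F]_n) i : conjb G Gi ->
  iter i (mulmx (G *m A *m Gi)) 1%:M = G *m iter i (mulmx A) 1%:M *m Gi.
Proof.
move=> [GGi GiG]; elim: i => [|i IH] /=; first by rewrite mulmx1 GGi.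
by rewrite IH !mulmxA -[G *m A *m Gi *m G](mulmxA _ Gi G) GiG mulmx1.
Qed.

Lemma mx_peval_conj n (p : {poly F}) (G Gi A : 'M[F]_n) : conjb G Gi ->
  mx_peval p (G *m A *m Gi) = G *m mx_peval p A *m Gi.
Proof.
move=> hG; rewrite /mx_peval mulmx_sumr mulmx_suml; apply: eq_bigr => i _.
by rewrite iter_conj // -scalemxAr -scalemxAl.
Qed.

Lemma iter_diag n (d : 'rV[F]_n) i :
  iter i (mulmx (diag_mx d)) 1%:M = diag_mx (\row_j (d 0 j) ^+ i).
Proof.
elim: i => [|i IH] /=.
  by apply/matrixP => a b; rewrite !mxE expr0.
rewrite IH mul_diag_mx; apply/matrixP => a b; rewrite !mxE.
by case: eqP => _; rewrite ?mulr1n ?mulr0n ?mulr0 // exprS.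
Qed.

Lemma mx_peval_diag n (p : {poly F}) (d : 'rV[F]_n) :
  mx_peval p (diag_mx d) = diag_mx (\row_j p.[d 0 j]).
Proof.
rewrite /mx_peval; apply/matrixP => a b.
rewrite summxE !mxE horner_coef.
under eq_bigr => i _ do rewrite iter_diag !mxE.
case: eqP => _; last by rewrite mulr0n; apply: big1 => i _; rewrite mulr0n mulr0.
by rewrite mulr1n; apply: eq_bigr => i _; rewrite mulr1n.
Qed.

Lemma S_conj n (p : {poly F}) (G Gi X : 'M[F]_n) : conjb G Gi ->
  in_p_commutators p X -> in_p_commutators p (G *m X *m Gi).
Proof.
move=> hG [A [B ->]]; exists (G *m A *m Gi), (G *m B *m Gi).
have E : forall U V : 'M[F]_n, (G *m U *m Gi) *m (G *m V *m Gi) = G *m (U *m V) *m Gi.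
  move=> U V; case: hG => _ h; by rewrite !mulmxA -[G *m U *m Gi *m G](mulmxA _ Gi G) h mulmx1.
by rewrite !E !mx_peval_conj // mulmxBr mulmxBl.
Qed.

Lemma S_diff n (p : {poly F}) (c : 'rV[F]_n) (G Gi H Hi : 'M[F]_n) :
  conjb G Gi -> conjb H Hi ->
  in_p_commutators p (G *m diag_mx (\row_j p.[c 0 j]) *m Gi
                      - H *m diag_mx (\row_j p.[c 0 j]) *m Hi).
Proof.
move=> [GGi GiG] [HHi HiH].
exists (G *m Hi), (H *m diag_mx c *m Gi).
have -> : G *m Hi *m (H *m diag_mx c *m Gi) = G *m diag_mx c *m Gi.
  by rewrite !mulmxA -(mulmxA G Hi H) HiH mulmx1.
have -> : H *m diag_mx c *m Gi *m (G *m Hi) = H *m diag_mx c *m Hi.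
  by rewrite !mulmxA -(mulmxA _ Gi G) GiG mulmx1.
by rewrite !mx_peval_conj ?mx_peval_diag //; split.
Qed.

End PartA.


Section PartB.
Variable F : fieldType.

Lemma conjb_block m (G1 Gi1 : 'M[F]_m) (x : 'rV[F]_m) : conjb G1 Gi1 ->
  conjb (block_mx 1%:M x 0 G1 : 'M_(1 + m)) (block_mx 1%:M (- x *m Gi1) 0 Gi1).
Proof.
move=> [h1 h2]; split; rewrite mulmx_block !mul0mx !mulmx0 !mul1mx ?addr0 ?add0r.
  by rewrite h1 mulNmx addNr -scalar_mx_block.
by rewrite -mulmxA h2 mulmx1 addrN -scalar_mx_block.
Qed.

Lemma trig_diag m (T : 'M[F]_m) (d : 'rV[F]_m) :
  (forall i j, i != j -> d 0 i != d 0 j) ->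
  (forall i j : 'I_m, (j < i)%N -> T i j = 0) ->
  (forall i, T i i = d 0 i) ->
  exists G Gi, conjb G Gi /\ T = G *m diag_mx d *m Gi.
Proof.
elim: m T d => [|m IH] T d hd hT hTd.
  exists 1%:M, 1%:M; split; first by split; rewrite mulmx1.
  by apply/matrixP => -[].
pose T' : 'M_(1 + m) := T.
pose d' : 'rV_(1 + m) := d.
set a := ulsubmx T'; set r := ursubmx T'; set c := dlsubmx T'; set T1 := drsubmx T'.
set dl := lsubmx d'; set dr := rsubmx d'.
have hTb : T = block_mx a r c T1 by rewrite submxK.
have hDb : diag_mx d = block_mx (diag_mx dl) 0 0 (diag_mx dr).
  by rewrite -diag_mx_row hsubmxK.
rewrite hTb hDb.
have hc : c = 0.
  apply/matrixP => i j; rewrite !mxE.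
  by apply: (hT (rshift 1 i) (lshift m j)); rewrite /= ord1.
have hT1 : forall i j : 'I_m, (j < i)%N -> T1 i j = 0.
  by move=> i j hij; rewrite !mxE; apply: (hT (rshift 1 i) (rshift 1 j)).
have hT1d : forall i, T1 i i = dr 0 i.
  by move=> i; rewrite !mxE (hTd (rshift 1 i)).
have hdr : forall i j, i != j -> dr 0 i != dr 0 j.
  move=> i j hij; rewrite !mxE; apply: hd.
  apply/eqP => /(f_equal val) /= /addnI h.
  by rewrite (val_inj h) eqxx in hij.
have [G1 [Gi1 [hG1 E1]]] := IH T1 dr hdr hT1 hT1d.
have ha : a = diag_mx dl.
  apply/matrixP => i j; rewrite !ord1 !mxE /=.
  by rewrite mulr1n /T' /d' hTd.
set lam := dl 0 0.
have hne : forall j, dr 0 j - lam != 0.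
  move=> j; rewrite subr_eq0 /lam !mxE /d'; apply: hd.
  by apply/eqP => /(f_equal val) /=.
pose x : 'rV_m := \row_j ((r *m G1) 0 j / (dr 0 j - lam)).
exists (block_mx 1%:M x 0 G1), (block_mx 1%:M (- x *m Gi1) 0 Gi1).
have hG := conjb_block x hG1.
split=> //.
suff hTG : block_mx a r c T1 *m block_mx 1%:M x 0 G1 =
           block_mx 1%:M x 0 G1 *m block_mx (diag_mx dl) 0 0 (diag_mx dr).
  by rewrite -hTG -mulmxA (proj1 hG) mulmx1.
rewrite !mulmx_block hc !mul0mx !mulmx0 !mulmx1 !mul1mx !addr0 !add0r ha.
congr block_mx.
- rewrite mul_mx_diag; apply/matrixP => i j.
  rewrite !mxE big_ord1 !ord1 !mxE eqxx mulr1n.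
  have hj := hne j; rewrite /lam !mxE in hj.
  set s := (\sum_(_ < _) _).
  rewrite /lam !mxE; field; exact: hj.
- case: hG1 => _ h; by rewrite E1 -!mulmxA h mulmx1.
Qed.

End PartB.

Section ZD.
Variable F : fieldType.

Lemma conjb_tr n (G Gi : 'M[F]_n) : conjb G Gi -> conjb Gi^T G^T.
Proof. by move=> [h1 h2]; split; rewrite -trmx_mul ?h1 ?h2 trmx1. Qed.

Lemma zd_S n (p : {poly F}) (c : 'rV[F]_n) :
  (forall i j, i != j -> p.[c 0 i] != p.[c 0 j]) ->
  forall Z : 'M[F]_n, (forall i, Z i i = 0) -> in_p_commutators p Z.
Proof.
move=> hc Z hZ.
set d := \row_j p.[c 0 j].
have hd : forall i j, i != j -> d 0 i != d 0 j by move=> i j hij; rewrite !mxE; apply: hc.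
pose P := diag_mx d + \matrix_(i, j) (if (i < j)%N then Z i j else 0).
pose Q := diag_mx d - \matrix_(i, j) (if (j < i)%N then Z i j else 0).
have hPQ : Z = P - Q.
  apply/matrixP => i j; rewrite !mxE.
  case: (ltngtP i j) => hij.
  - by rewrite -val_eqE /= (ltn_eqF hij) mulr0n; ring.
  - by rewrite -val_eqE /= (gtn_eqF hij) mulr0n; ring.
  - by rewrite (val_inj hij) eqxx hZ mulr1n; ring.
have [G [Gi [hG EP]]] : exists G Gi, conjb G Gi /\ P = G *m diag_mx d *m Gi.
  apply: trig_diag => // [i j hij|i].
    rewrite !mxE; case: eqP => [h|_]; first by move: hij; rewrite h ltnn.
    by rewrite mulr0n add0r ltnNge (ltnW hij).
  by rewrite !mxE eqxx mulr1n ltnn addr0.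
have [H [Hi [hH EQ]]] : exists G Gi, conjb G Gi /\ Q^T = G *m diag_mx d *m Gi.
  apply: trig_diag => // [i j hij|i].
    rewrite !mxE; case: eqP => [h|_]; first by move: hij; rewrite h ltnn.
    by rewrite mulr0n ltnNge (ltnW hij) subr0.
  by rewrite !mxE eqxx mulr1n ltnn subr0.
have EQ' : Q = Hi^T *m diag_mx d *m H^T.
  by rewrite -[Q]trmxK EQ !trmx_mul tr_diag_mx mulmxA.
rewrite hPQ EP EQ'; apply: S_diff => //; exact: conjb_tr.
Qed.

End ZD.


Section PartC.
Variable F : fieldType.
Hypothesis hF : infinite_type F.

Lemma exists_notin (s : seq F) : exists x, x \notin s.
Proof.
apply: NNPP => hn; apply: hF; exists s => x.
by apply/negPn/negP => hx; apply: hn; exists x.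
Qed.

Lemma exists_uniq k : exists l : seq F, uniq l /\ size l = k.
Proof.
elim: k => [|k [l [hu hs]]]; first by exists [::].
have [x hx] := exists_notin l.
by exists (x :: l); rewrite /= hx hu hs.
Qed.

Lemma exists_nonroot (q : {poly F}) : q != 0 -> exists x, q.[x] != 0.
Proof.
move=> hq; apply: NNPP => hn.
have [l [hu hs]] := exists_uniq (size q).
have : (size l < size q)%N.
  apply: max_poly_roots hq _ hu.
  apply/allP => x _; rewrite /root; apply/negPn/negP => hx; apply: hn; by exists x.
by rewrite hs ltnn.
Qed.

Lemma exists_nonroot_notin (q : {poly F}) (s : seq F) : q != 0 ->
  exists x, q.[x] != 0 /\ x \notin s.
Proof.
move=> hq.
have hq' : q * \prod_(v <- s) ('X - v%:P) != 0.
  rewrite mulf_eq0 negb_or hq /=; rewrite prodf_seq_eq0; apply/hasPn => v _.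
  by rewrite polyXsubC_eq0.
have [x hx] := exists_nonroot hq'.
exists x; move: hx; rewrite hornerM mulf_eq0 negb_or => /andP [h1 h2]; split => //.
apply/negP => hxs; move: h2; rewrite horner_prod.
by rewrite (big_rem x hxs) /= !hornerE subrr mul0r eqxx.
Qed.

Lemma distinct_pvals (p : {poly F}) n : (1 < size p)%N ->
  exists c : 'rV[F]_n, forall i j, i != j -> p.[c 0 i] != p.[c 0 j].
Proof.
move=> hp.
have [l [hu hs]] : exists l : seq F, uniq (map (fun x => p.[x]) l) /\ size l = n.
  elim: n => [|k [l [hu hs]]]; first by exists [::].
  pose q := \prod_(v <- map (fun x => p.[x]) l) (p - v%:P).
  have hq : q != 0.
    rewrite prodf_seq_eq0; apply/hasPn => v _; rewrite subr_eq0.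
    apply/eqP => h; move: hp; rewrite h size_polyC; by case: (v != 0).
  have [x hx] := exists_nonroot hq.
  exists (x :: l); split; last by rewrite /= hs.
  rewrite /= hu andbT; apply/negP => hxl; move: hx.
  by rewrite /q horner_prod (big_rem _ hxl) /= !hornerE subrr mul0r eqxx.
exists (\row_i nth 0 l i) => i j hij; rewrite !mxE.
rewrite -!(nth_map 0 0 (fun x => p.[x])) ?hs ?ltn_ord //.
by rewrite nth_uniq ?size_map ?hs ?ltn_ord.
Qed.

End PartC.


Section PartD.
Variable F : fieldType.

Definition sim n (A B : 'M[F]_n) := exists G Gi, conjb G Gi /\ B = G *m A *m Gi.
Definition nsc n (A : 'M[F]_n) := forall s : F, A <> s%:M.

Lemma sim_refl n (A : 'M[F]_n) : sim A A.
Proof. by exists 1%:M, 1%:M; rewrite mul1mx mulmx1; split => //; split; rewrite mulmx1. Qed.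

Lemma sim_trans n (A B C : 'M[F]_n) : sim A B -> sim B C -> sim A C.
Proof.
move=> [G [Gi [[h1 h2] ->]]] [H [Hi [[k1 k2] ->]]].
exists (H *m G), (Gi *m Hi); split; last by rewrite !mulmxA.
split.
  by rewrite mulmxA -(mulmxA H G Gi) h1 mulmx1 k1.
by rewrite mulmxA -(mulmxA Gi Hi H) k2 mulmx1 h2.
Qed.

Lemma sim_sym n (A B : 'M[F]_n) : sim A B -> sim B A.
Proof.
move=> [G [Gi [[h1 h2] ->]]]; exists Gi, G; split => //.
by rewrite !mulmxA h2 mul1mx -mulmxA h2 mulmx1.
Qed.

Lemma sim_tr n (A B : 'M[F]_n) : sim A B -> \tr B = \tr A.
Proof.
move=> [G [Gi [[h1 h2] ->]]].
by rewrite mxtrace_mulC mulmxA h2 mul1mx.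
Qed.

Lemma sim_nsc n (A B : 'M[F]_n) : sim A B -> nsc A -> nsc B.
Proof.
move=> [G [Gi [[h1 h2] ->]]] hA s hs; apply: (hA s).
have : Gi *m (G *m A *m Gi) *m G = Gi *m s%:M *m G by rewrite hs.
by rewrite !mulmxA h2 mul1mx -mulmxA h2 mulmx1 mul_mx_scalar -scalemxAl h2 scalemx1.
Qed.

Lemma block_nsc m1 m2 (a : 'M[F]_m1) r c (A1 : 'M[F]_m2) :
  nsc A1 -> nsc (block_mx a r c A1).
Proof.
move=> h s; rewrite scalar_mx_block => /eq_block_mx [_ _ _ e].
exact: (h s).
Qed.

Ltac bsimp := rewrite ?mulmx_block ?mul1mx ?mulmx1 ?mul0mx ?mulmx0 ?addr0 ?add0r.

Lemma sim_up m (a : 'M[F]_1) r c (A1 : 'M[F]_m) u :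
  sim (block_mx a r c A1)
      (block_mx (a + u *m c) ((a + u *m c) *m - u + (r + u *m A1)) c (c *m - u + A1)).
Proof.
exists (block_mx 1%:M u 0 1%:M), (block_mx 1%:M (- u) 0 1%:M); split; last by bsimp.
by split; bsimp; rewrite ?mulmxN ?addNr ?addrN -scalar_mx_block.
Qed.

Lemma sim_low m (a : 'M[F]_1) r c (A1 : 'M[F]_m) v :
  sim (block_mx a r c A1)
      (block_mx (a + r *m - v) r (v *m a + c + (v *m r + A1) *m - v) (v *m r + A1)).
Proof.
exists (block_mx 1%:M 0 v 1%:M), (block_mx 1%:M 0 (- v) 1%:M); split; last by bsimp.
by split; bsimp; rewrite ?mulmxN ?mulNmx ?addNr ?addrN -scalar_mx_block.
Qed.

Lemma sim_bd m (a : 'M[F]_1) r c (A1 : 'M[F]_m) H Hi : conjb H Hi ->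
  sim (block_mx a r c A1) (block_mx a (r *m Hi) (H *m c) (H *m A1 *m Hi)).
Proof.
move=> [h1 h2].
exists (block_mx 1%:M 0 0 H), (block_mx 1%:M 0 0 Hi); split; last by bsimp.
by split; bsimp; rewrite ?h1 ?h2 -scalar_mx_block.
Qed.

End PartD.


Section PartE.
Variable F : fieldType.

Lemma col_nz m (c : 'cV[F]_m) : c != 0 -> exists j, c j 0 != 0.
Proof.
move=> hc; apply/existsP; apply: contraR hc; rewrite negb_exists => /forallP h.
by apply/eqP/matrixP => i j; rewrite ord1 mxE; apply/eqP; move: (h i); rewrite negbK.
Qed.

Lemma row_nz m (r : 'rV[F]_m) : r != 0 -> exists j, r 0 j != 0.
Proof.
move=> hr; apply/existsP; apply: contraR hr; rewrite negb_exists => /forallP h.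
by apply/eqP/matrixP => i j; rewrite ord1 mxE; apply/eqP; move: (h j); rewrite negbK.
Qed.

Lemma offdiag_nsc n (A : 'M[F]_n) j k : j != k -> A j k != 0 -> nsc A.
Proof. by move=> hjk hA s hs; move: hA; rewrite hs mxE (negbTE hjk) mulr0n eqxx. Qed.

Lemma mx11_eq (a b : 'M[F]_1) : a 0 0 = b 0 0 -> a = b.
Proof. by move=> h; apply/matrixP => i j; rewrite !ord1. Qed.

Lemma delta_row_mul m (j : 'I_m) (c : 'cV[F]_m) : (delta_mx 0 j *m c) = (c j 0)%:M.
Proof. by apply: mx11_eq; rewrite -rowE !mxE. Qed.

Lemma delta_col_mul m (j : 'I_m) (r : 'rV[F]_m) : (r *m delta_mx j 0) = (r 0 j)%:M.
Proof. by apply: mx11_eq; rewrite -colE !mxE. Qed.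

Lemma fill_c m (a : 'M[F]_1) r c (A1 : 'M[F]_m) : c != 0 ->
  exists r' A1', sim (block_mx a r c A1) (block_mx 0 r' c A1').
Proof.
move=> /col_nz [j hj].
pose u : 'rV_m := (- a 0 0 / c j 0) *: delta_mx 0 j.
have hS := @sim_up F m a r c A1 u.
have hz : a + u *m c = 0.
  apply: mx11_eq; rewrite /u -scalemxAl delta_row_mul !mxE eqxx mulr1n.
  by field.
rewrite hz in hS; by exists (0 *m - u + (r + u *m A1)), (c *m - u + A1).
Qed.

Lemma mx_nz m n (A : 'M[F]_(m, n)) : A != 0 -> exists i j, A i j != 0.
Proof.
move=> hA; have : [exists i, exists j, A i j != 0].
  apply: contraR hA => /existsPn h; apply/eqP/matrixP => i j; rewrite mxE.
  by move/existsPn: (h i) => /(_ j); rewrite negbK => /eqP.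
by move=> /existsP [i /existsP [j h]]; exists i, j.
Qed.

Lemma fill_r m (a : 'M[F]_1) r c (A1 : 'M[F]_m) : r != 0 ->
  exists c' A1', sim (block_mx a r c A1) (block_mx 0 r c' A1').
Proof.
move=> /row_nz [j hj].
pose v : 'cV_m := (a 0 0 / r 0 j) *: delta_mx j 0.
have hS := @sim_low F m a r c A1 v.
have hz : a + r *m - v = 0.
  apply: mx11_eq; rewrite /v mulmxN -scalemxAr delta_col_mul !mxE eqxx mulr1n.
  by field.
rewrite hz in hS; by exists (v *m a + c + (v *m r + A1) *m - v), (v *m r + A1).
Qed.

Lemma fill_1a m (a : 'M[F]_1) r c (A1 : 'M[F]_m) : nsc (block_mx a r c A1) ->
  exists r' c' A1', sim (block_mx a r c A1) (block_mx 0 r' c' A1').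
Proof.
move=> hn.
have [ha|ha] := eqVneq a 0.
  by rewrite ha; exists r, c, A1; exact: sim_refl.
have [hc|hc] := eqVneq c 0; last first.
  by have [r' [A1' h]] := @fill_c m a r c A1 hc; exists r', c, A1'.
have [hr|hr] := eqVneq r 0; last first.
  by have [c' [A1' h]] := @fill_r m a r c A1 hr; exists r, c', A1'.
subst c r.
have hA1 : A1 - (a 0 0)%:M != 0.
  apply/eqP => /eqP; rewrite subr_eq0 => /eqP hA1; apply: (hn (a 0 0)).
  rewrite hA1 [X in _ = X]scalar_mx_block; congr block_mx.
  by apply: mx11_eq; rewrite !mxE eqxx mulr1n.
have [i [j hij]] := mx_nz hA1.
pose v : 'cV[F]_m := delta_mx j 0.
have hS := @sim_low F m a 0 0 A1 v.
rewrite !mul0mx !mulmx0 !addr0 !add0r in hS.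
have hc' : v *m a + A1 *m - v != 0.
  apply/eqP => /matrixP /(_ i 0); rewrite mulmxN /v -colE !mxE big_ord1 !mxE.
  move: hij; rewrite !mxE eqxx andbT.
  case: (i == j) => /= hij.
    rewrite mulr1n mul1r => /eqP; rewrite subr_eq0 => /eqP e.
    by move: hij; rewrite e subrr eqxx.
  by rewrite mulr0n mul0r sub0r => /eqP; rewrite oppr_eq0 => /eqP e; move: hij; rewrite e subrr eqxx.
have [r' [A1' h2]] := @fill_c m a 0 _ A1 hc'.
exists r', (v *m a + A1 *m - v), A1'; exact: sim_trans hS h2.
Qed.

Lemma fill_1b_c m (a : 'M[F]_1) (r : 'rV[F]_m.+2) (c : 'cV[F]_m.+2) s : c != 0 ->
  exists r' A1', sim (block_mx a r c s%:M) (block_mx a r' c A1') /\ nsc A1'.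
Proof.
move=> /col_nz [j hj].
pose k := lift j (ord0 : 'I_m.+1).
have hjk : j != k := neq_lift _ _.
pose u : 'rV[F]_m.+2 := (c k 0) *: delta_mx 0 j - (c j 0) *: delta_mx 0 k.
have hS := @sim_up F m.+2 a r c s%:M u.
have hz : a + u *m c = a.
  rewrite mulmxBl -!scalemxAl !delta_row_mul !scale_scalar_mx.
  by rewrite mulrC subrr addr0.
rewrite hz in hS; exists (a *m - u + (r + u *m s%:M)), (c *m - u + s%:M); split => //.
apply: (offdiag_nsc hjk).
rewrite !mxE big_ord1 !mxE.
set t1 := (j == k); set t2 := (k == j).
have -> : t1 = false by exact: negbTE hjk.
have -> : t2 = false by rewrite /t2 eq_sym; exact: negbTE hjk.
rewrite mulr0n addr0 !eqxx /=.
by rewrite mulr0 sub0r mulr1 opprK mulf_neq0.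
Qed.

Lemma fill_1b_r m (a : 'M[F]_1) (r : 'rV[F]_m.+2) (c : 'cV[F]_m.+2) s : r != 0 ->
  exists c' A1', sim (block_mx a r c s%:M) (block_mx a r c' A1') /\ nsc A1'.
Proof.
move=> /row_nz [j hj].
pose k := lift j (ord0 : 'I_m.+1).
have hjk : j != k := neq_lift _ _.
pose v : 'cV[F]_m.+2 := (r 0 k) *: delta_mx j 0 - (r 0 j) *: delta_mx k 0.
have hS := @sim_low F m.+2 a r c s%:M v.
have hz : a + r *m - v = a.
  by rewrite mulmxN mulmxBr -!scalemxAr !delta_col_mul !scale_scalar_mx mulrC subrr oppr0 addr0.
rewrite hz in hS; exists (v *m a + c + (v *m r + s%:M) *m - v), (v *m r + s%:M); split => //.
have hkj : k != j by rewrite eq_sym.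
apply: (offdiag_nsc hkj).
rewrite !mxE big_ord1 !mxE.
set t2 := (k == j).
have -> : t2 = false by exact: negbTE hkj.
rewrite mulr0n addr0 !eqxx /=.
by rewrite mulr0 sub0r mulr1 mulNr oppr_eq0 mulf_neq0.
Qed.

Lemma fill_1b m (r : 'rV[F]_m.+1) (c : 'cV[F]_m.+1) A1 : \tr A1 = 0 ->
  nsc (block_mx (0 : 'M_1) r c A1) ->
  exists r' c' A1', sim (block_mx (0 : 'M_1) r c A1) (block_mx 0 r' c' A1') /\ (A1' = 0 \/ nsc A1').
Proof.
move=> htr hn.
have [hsc|hns] := boolP (is_scalar_mx A1); last first.
  exists r, c, A1; split; first exact: sim_refl.
  by right => t ht; move: hns; rewrite ht; apply/negP/negPn/is_scalar_mxP; exists t.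
move/is_scalar_mxP: hsc => [s hs].
have [s0|s0] := eqVneq s 0.
  exists r, c, A1; split; first exact: sim_refl.
  by left; rewrite hs s0 raddf0.
subst A1; case: m r c htr hn => [|m] r c htr hn.
  by move: htr; rewrite mxtrace_scalar mulr1n => /eqP; rewrite (negbTE s0).
have [hc|hc] := eqVneq c 0; last first.
  by have [r' [A1' [h1 h2]]] := fill_1b_c 0 r s hc; exists r', c, A1'; split => //; right.
have [hr|hr] := eqVneq r 0; last first.
  by have [c' [A1' [h1 h2]]] := fill_1b_r 0 c s hr; exists r, c', A1'; split => //; right.
subst r c.
pose v : 'cV[F]_m.+2 := delta_mx 0 0.
have hS := @sim_low F m.+2 0 0 0 s%:M v.
rewrite !mul0mx !mulmx0 !addr0 !add0r in hS.
have hc' : s%:M *m - v != 0.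
  apply/eqP => /matrixP /(_ 0 0); rewrite mulmxN mul_scalar_mx !mxE !eqxx mulr1n.
  by move/eqP; rewrite mulr1 oppr_eq0 (negbTE s0).
have [r' [A1' [h1 h2]]] := fill_1b_c 0 0 s hc'.
exists r', (s%:M *m - v), A1'; split; last by right.
exact: sim_trans hS h1.
Qed.

End PartE.


Section PartF.
Variable F : fieldType.

Lemma tr_block0 m r c (A1 : 'M[F]_m) (A : 'M[F]_(1 + m)) :
  sim A (block_mx 0 r c A1) -> \tr A = 0 -> \tr A1 = 0.
Proof.
move=> /sim_tr; rewrite mxtrace_block mxtrace0 add0r => -> //.
Qed.

Lemma block_diag0 m (r : 'rV[F]_m) c (B : 'M[F]_m) : (forall i, B i i = 0) ->
  forall i : 'I_(1 + m), (block_mx (0 : 'M_1) r c B) i i = 0.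
Proof.
move=> hB i; rewrite -(splitK i); case: (split i) => j /=.
  by rewrite block_mxEul mxE.
by rewrite block_mxEdr hB.
Qed.

Lemma fillmore m : forall A : 'M[F]_m.+1, \tr A = 0 -> (A = 0 \/ nsc A) ->
  exists B, sim A B /\ forall i, B i i = 0.
Proof.
elim: m => [|m IH] A htr hA.
  exists A; split; first exact: sim_refl.
  by move=> i; rewrite ord1; move: htr; rewrite /mxtrace big_ord1.
case: hA => [->|hA].
  by exists 0; split; [exact: sim_refl | move=> i; rewrite mxE].
pose A' : 'M[F]_(1 + m.+1) := A.
have hb : A = block_mx (ulsubmx A') (ursubmx A') (dlsubmx A') (drsubmx A') by rewrite submxK.
rewrite hb in hA htr *.
have [r1 [c1 [A2 h1]]] := fill_1a hA.
have htr2 := tr_block0 h1 htr.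
have [r2 [c2 [A3 [h2 hA3]]]] := fill_1b htr2 (sim_nsc h1 hA).
have htr3 := tr_block0 (sim_trans h1 h2) htr.
have [B3 [[H [Hi [hH EB]]] hB3]] := IH A3 htr3 hA3.
exists (block_mx 0 (r2 *m Hi) (H *m c2) B3); split.
  apply: sim_trans (sim_trans h1 h2) _; rewrite EB; exact: sim_bd.
move=> i; exact: (block_diag0 (r2 *m Hi) (H *m c2) hB3 i).
Qed.

End PartF.


Section PartG.
Variable F : fieldType.

Definition claimP n (M : 'M[F]_n) (b : F) := exists X Xi, conjb X Xi /\ \tr X = b /\
  \tr (Xi *m M) = 0 /\ nsc X /\ nsc (Xi *m M).

Lemma conjb_swap n (G Gi : 'M[F]_n) : conjb G Gi -> conjb Gi G.
Proof. by case. Qed.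

Lemma sim_of n (G Gi A : 'M[F]_n) : conjb G Gi -> sim A (G *m A *m Gi).
Proof. by move=> h; exists G, Gi. Qed.

Lemma claim_sim n (M M' : 'M[F]_n) b : sim M M' -> claimP M' b -> claimP M b.
Proof.
move=> [G [Gi [hG EM]]] [X [Xi [hX [h1 [h2 [h3 h4]]]]]].
have hG' := conjb_swap hG.
case: hG => GGi GiG; case: hX => XXi XiX.
exists (Gi *m X *m G), (Gi *m Xi *m G).
have E1 : Gi *m Xi *m G *m M = Gi *m (Xi *m M') *m G.
  by rewrite EM !mulmxA -(mulmxA _ Gi G) GiG mulmx1.
split; [split|split].
- by rewrite !mulmxA -(mulmxA _ G Gi) GGi mulmx1 -(mulmxA _ X Xi) XXi mulmx1 GiG.
- by rewrite !mulmxA -(mulmxA _ G Gi) GGi mulmx1 -(mulmxA _ Xi X) XiX mulmx1 GiG.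
- by rewrite (sim_tr (sim_of X hG')).
split; first by rewrite E1 (sim_tr (sim_of _ hG')).
split; first exact: sim_nsc (sim_of X hG') h3.
by rewrite E1; exact: sim_nsc (sim_of _ hG') h4.
Qed.

Lemma nsc_tr n (A : 'M[F]_n) : nsc A -> nsc A^T.
Proof. by move=> h s hs; apply: (h s); rewrite -[A]trmxK hs tr_scalar_mx. Qed.

Lemma claim_tr n (M : 'M[F]_n) b : claimP M^T b -> claimP M b.
Proof.
move=> [X [Xi [[XXi XiX] [h1 [h2 [h3 h4]]]]]].
exists X^T, Xi^T; split; first exact: conjb_tr.
split; first by rewrite mxtrace_tr.
have E : Xi^T *m M = (M^T *m Xi)^T by rewrite trmx_mul trmxK.
split; first by rewrite E mxtrace_tr mxtrace_mulC.
split; first exact: nsc_tr.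
rewrite E; apply: nsc_tr.
have -> : M^T *m Xi = X *m (Xi *m M^T) *m Xi by rewrite !mulmxA XXi mul1mx.
exact: sim_nsc (sim_of _ (conj XXi XiX)) h4.
Qed.

Lemma claim_block m (a : 'M[F]_1) r c (A1 : 'M[F]_m) b : c != 0 ->
  claimP A1 (b - 1) -> claimP (block_mx a r c A1) b.
Proof.
move=> hc [X1 [X1i [hX1 [h1 [h2 [h3 h4]]]]]].
have hw : X1i *m c != 0.
  apply: contra hc => /eqP hw; apply/eqP.
  by rewrite -[c]mul1mx -(proj1 hX1) -mulmxA hw mulmx0.
move: hw; move Ew : (X1i *m c) => w hw.
have [j hj] := col_nz hw.
pose x : 'rV[F]_m := (a 0 0 / w j 0) *: delta_mx 0 j.
exists (block_mx 1%:M x 0 X1), (block_mx 1%:M (- x *m X1i) 0 X1i).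
split; first exact: conjb_block.
split; first by rewrite mxtrace_block mxtrace1 h1 addrC subrK.
have hM : block_mx 1%:M (- x *m X1i) 0 X1i *m block_mx a r c A1 =
   block_mx (a - x *m w) (r - x *m X1i *m A1) w (X1i *m A1).
  by rewrite -Ew mulmx_block !mul1mx !mul0mx !add0r !mulNmx !mulmxA.
rewrite hM; split.
  rewrite mxtrace_block h2 addr0 /mxtrace big_ord1.
  rewrite /x -scalemxAl delta_row_mul !mxE !eqxx mulr1n.
  by rewrite divfK // subrr.
by split; apply: block_nsc.
Qed.

Lemma cprime_nz m (a : 'M[F]_1) (A1 : 'M[F]_m) i j : (A1 - (a 0 0)%:M) i j != 0 ->
  delta_mx j 0 *m a + A1 *m - delta_mx j 0 != 0.
Proof.
move=> hij.
apply/eqP => /matrixP /(_ i 0); rewrite mulmxN -colE !mxE big_ord1 !mxE.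
move: hij; rewrite !mxE eqxx andbT.
case: (i == j) => /= hij.
  rewrite mulr1n mul1r => /eqP; rewrite subr_eq0 => /eqP e.
  by move: hij; rewrite e subrr eqxx.
by rewrite mulr0n mul0r sub0r => /eqP; rewrite oppr_eq0 => /eqP e; move: hij; rewrite e subrr eqxx.
Qed.

Lemma step_conj m (a : 'M[F]_1) r c (A1 : 'M[F]_m.+2) : nsc (block_mx a r c A1) ->
  exists a' r' c' A1', sim (block_mx a r c A1) (block_mx a' r' c' A1') /\ nsc A1' /\
    (c' != 0 \/ r' != 0).
Proof.
move=> hn.
have stage2 : forall (r : 'rV[F]_m.+2) (c : 'cV[F]_m.+2) (A1 : 'M[F]_m.+2),
    nsc (block_mx a r c A1) -> nsc A1 ->
  exists a' r' c' A1', sim (block_mx a r c A1) (block_mx a' r' c' A1') /\ nsc A1' /\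
    (c' != 0 \/ r' != 0).
  move=> r0 c0 B hn0 hB.
  have [hc|hc] := eqVneq c0 0; last first.
    by exists a, r0, c0, B; split; [exact: sim_refl | split => //; left].
  have [hr|hr] := eqVneq r0 0; last first.
    by exists a, r0, c0, B; split; [exact: sim_refl | split => //; right].
  subst c0 r0.
  have hB' : B - (a 0 0)%:M != 0 by apply/eqP => /eqP; rewrite subr_eq0 => /eqP e; exact: (hB (a 0 0)).
  have [i [j hij]] := mx_nz hB'.
  have hS := @sim_low F m.+2 a 0 0 B (delta_mx j 0).
  rewrite !mul0mx !mulmx0 !addr0 !add0r in hS.
  exists a, 0, (delta_mx j 0 *m a + B *m - delta_mx j 0), B; split => //; split => //.
  by left; exact: cprime_nz hij.
have [hsc|hns] := boolP (is_scalar_mx A1); last first.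
  apply: stage2 => // t ht; move: hns; rewrite ht; apply/negP/negPn/is_scalar_mxP; by exists t.
move/is_scalar_mxP: hsc => [s hs]; subst A1.
have [hc|hc] := eqVneq c 0; last first.
  have [r' [A1' [h1 h2]]] := fill_1b_c a r s hc.
  by exists a, r', c, A1'; split => //; split => //; left.
have [hr|hr] := eqVneq r 0; last first.
  have [c' [A1' [h1 h2]]] := fill_1b_r a c s hr.
  by exists a, r, c', A1'; split => //; split => //; right.
subst c r.
have hB' : (s%:M : 'M[F]_m.+2) - (a 0 0)%:M != 0.
  apply/eqP => /eqP; rewrite subr_eq0 => /eqP e; apply: (hn (a 0 0)).
  rewrite e [X in _ = X]scalar_mx_block; congr block_mx.
  by apply: mx11_eq; rewrite !mxE eqxx mulr1n.
have [i [j hij]] := mx_nz hB'.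
have hS := @sim_low F m.+2 a 0 0 s%:M (delta_mx j 0).
rewrite !mul0mx !mulmx0 !addr0 !add0r in hS.
have hc' := cprime_nz hij.
have [r' [A1' [h1 h2]]] := fill_1b_c a 0 s hc'.
exists a, r', (delta_mx j 0 *m a + s%:M *m - delta_mx j 0), A1'; split.
  exact: sim_trans hS h1.
by split => //; left.
Qed.

End PartG.


Section PartH.
Variable F : fieldType.

Definition mk2 (a b c d : F) : 'M[F]_(1 + 1) := block_mx a%:M b%:M c%:M d%:M.

Lemma mk2_mul a b c d a' b' c' d' :
  mk2 a b c d *m mk2 a' b' c' d' =
  mk2 (a * a' + b * c') (a * b' + b * d') (c * a' + d * c') (c * b' + d * d').
Proof. by rewrite /mk2 mulmx_block -!scalar_mxM -!raddfD. Qed.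

Lemma mk2_1 : mk2 1 0 0 1 = 1%:M.
Proof. by rewrite /mk2 raddf0 -scalar_mx_block. Qed.

Lemma mk2_tr a b c d : \tr (mk2 a b c d) = a + d.
Proof. by rewrite /mk2 mxtrace_block !mxtrace_scalar !mulr1n. Qed.

Lemma s11_inj (x y : F) : (x%:M : 'M[F]_1) = y%:M -> x = y.
Proof. by move/matrixP/(_ 0 0); rewrite !mxE eqxx !mulr1n. Qed.

Lemma mk2_eq a b c d a' b' c' d' : a = a' -> b = b' -> c = c' -> d = d' ->
  mk2 a b c d = mk2 a' b' c' d'.
Proof. by move=> -> -> -> ->. Qed.

Lemma mk2_nsc_c a b c d : c != 0 -> nsc (mk2 a b c d).
Proof.
move=> hc s; rewrite /mk2 scalar_mx_block => /eq_block_mx [_ _ e _].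
by move: hc; rewrite (s11_inj (etrans e (esym (raddf0 _)))) eqxx.
Qed.

Lemma mk2_nsc_b a b c d : b != 0 -> nsc (mk2 a b c d).
Proof.
move=> hb s; rewrite /mk2 scalar_mx_block => /eq_block_mx [_ e _ _].
by move: hb; rewrite (s11_inj (etrans e (esym (raddf0 _)))) eqxx.
Qed.

Lemma mk2_nsc_ad a b c d : a != d -> nsc (mk2 a b c d).
Proof.
move=> had s; rewrite /mk2 scalar_mx_block => /eq_block_mx [e1 _ _ e2].
by move: had; rewrite (s11_inj e1) (s11_inj e2) eqxx.
Qed.

Lemma baseU a0 r0 c0 d0 b al : c0 != 0 -> al != 0 -> b - al != 0 ->
  ((a0 * (b - al) + al * d0) / c0 != 0 \/ al != b - al) ->
  claimP (mk2 a0 r0 c0 d0) b.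
Proof.
move=> hc ha hd hx.
move: hd hx; move Ede : (b - al) => de hd.
move Ex : ((a0 * de + al * d0) / c0) => x hx.
exists (mk2 al x 0 de), (mk2 (1 / al) (- x / (al * de)) 0 (1 / de)).
split; first split.
- rewrite mk2_mul -mk2_1; apply: mk2_eq; field; by rewrite ?ha ?hd.
- rewrite mk2_mul -mk2_1; apply: mk2_eq.
  + field. by rewrite ?ha ?hd.
  + field. by rewrite ?ha ?hd.
  + field. by rewrite ?ha ?hd.
  + field. by rewrite ?ha ?hd.
rewrite mk2_mul mk2_tr; split; first by rewrite -Ede addrC subrK.
split.
  rewrite mk2_tr -Ex; field; by rewrite ?ha ?hd ?hc.
split.
  case: hx => hx; first exact: mk2_nsc_b.
  exact: mk2_nsc_ad.
apply: mk2_nsc_c; rewrite mul0r add0r mul1r; apply: mulf_neq0 => //.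
by rewrite invr_eq0.
Qed.

Lemma baseS a0 r0 c0 x1 : (2 : F) = 0 -> c0 != 0 -> x1 + a0 != 0 ->
  x1 * x1 + r0 * c0 != 0 -> claimP (mk2 a0 r0 c0 a0) 0.
Proof.
move=> h2 hc hx hD.
move: hD; move ED : (x1 * x1 + r0 * c0) => D hD.
exists (mk2 x1 r0 (- c0) x1), (mk2 (x1 / D) (- r0 / D) (c0 / D) (x1 / D)).
split; first split.
- rewrite mk2_mul -mk2_1; apply: mk2_eq; rewrite -?ED; field; by rewrite ED.
- rewrite mk2_mul -mk2_1; apply: mk2_eq; rewrite -?ED; field; by rewrite ED.
rewrite mk2_mul !mk2_tr; split.
  by rewrite -mulr2n -mulr_natr h2 mulr0.
split.
  have -> : x1 / D * a0 + - r0 / D * c0 + (c0 / D * r0 + x1 / D * a0) = x1 / D * a0 * 2.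
    by ring.
  by rewrite h2 mulr0.
split; first by apply: mk2_nsc_c; rewrite oppr_eq0.
apply: mk2_nsc_c.
have -> : c0 / D * a0 + x1 / D * c0 = c0 * (x1 + a0) / D by ring.
by rewrite mulf_neq0 ?invr_eq0 // mulf_neq0.
Qed.

Hypothesis hF : infinite_type F.

Lemma base_c a0 r0 c0 d0 b : c0 != 0 -> claimP (mk2 a0 r0 c0 d0) b.
Proof.
move=> hc.
have [hd|hd] := eqVneq d0 a0; last first.
  have [al hal] := exists_notin hF [:: 0; b; a0 * b / (a0 - d0)].
  move: hal; rewrite !inE !negb_or => /and3P [h0 hb hx].
  apply: (@baseU a0 r0 c0 d0 b al hc h0); first by rewrite subr_eq0 eq_sym.
  left; rewrite mulf_neq0 ?invr_eq0 //.
  apply: contra hx => /eqP e; apply/eqP.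
  have had : a0 - d0 != 0 by rewrite subr_eq0 eq_sym.
  apply: (mulIf had); rewrite divfK //.
  have : al * (a0 - d0) - a0 * b = - (a0 * (b - al) + al * d0) by ring.
  by rewrite e oppr0 => /eqP; rewrite subr_eq0 => /eqP.
subst d0.
have [hb2|hb2] := boolP ((b != 0) || ((2 : F) != 0)).
  have [al hal] := exists_notin hF [:: 0; b; b / 2].
  move: hal; rewrite !inE !negb_or => /and3P [h0 hb hx].
  apply: (@baseU a0 r0 c0 a0 b al hc h0); first by rewrite subr_eq0 eq_sym.
  right; apply/negP => /eqP e.
  have e2 : al * 2 = b.
    apply/eqP; rewrite -subr_eq0.
    have -> : al * 2 - b = - (b - al - al) by ring.
    by rewrite -e subrr oppr0.
  case/orP: hb2 => h.
    have h2 : (2 : F) != 0.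
      apply/negP => /eqP h2; move: e2; rewrite h2 mulr0 => e0; by rewrite -e0 eqxx in h.
    by move: hx; rewrite -e2 mulfK // eqxx.
  by move: hx; rewrite -e2 mulfK // eqxx.
move: hb2; rewrite negb_or !negbK => /andP [/eqP hb /eqP h2]; subst b.
pose q : {poly F} := 'X^2 + (r0 * c0)%:P.
have hq : q != 0 by rewrite monic_neq0 // monicXnaddC.
have [x1 [hx1 hs]] := exists_nonroot_notin hF [:: - a0] hq.
apply: (@baseS a0 r0 c0 x1 h2 hc).
  by move: hs; rewrite inE -subr_eq0 opprK.
by move: hx1; rewrite /q !hornerE expr2.
Qed.

Lemma claim2 (M : 'M[F]_(1 + 1)) b : nsc M -> claimP M b.
Proof.
move=> hn.
have EM : M = mk2 (M (lshift 1 0) (lshift 1 0)) (M (lshift 1 0) (rshift 1 0))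
                  (M (rshift 1 0) (lshift 1 0)) (M (rshift 1 0) (rshift 1 0)).
  rewrite -[M]submxK /mk2 !block_mxEul !block_mxEur !block_mxEdl !block_mxEdr.
  by rewrite -!mx11_scalar.
rewrite EM in hn *.
move: hn; set a := M _ _; set r := M _ _; set c := M _ _; set d := M _ _.
clearbody a r c d => hn.
have [hc|hc] := eqVneq c 0; first last.
  exact: base_c.
have [hr|hr] := eqVneq r 0; first last.
  apply: claim_tr.
  have -> : (mk2 a r c d)^T = mk2 a c r d.
    by rewrite /mk2 tr_block_mx !tr_scalar_mx.
  exact: base_c.
subst c r.
have had : a != d.
  by apply/negP => /eqP e; apply: (hn a); rewrite /mk2 e raddf0 -scalar_mx_block.
apply: (@claim_sim _ _ _ (mk2 a 0 (a - d) d)).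
  exists (mk2 1 0 1 1), (mk2 1 0 (-1) 1); split.
    split; rewrite mk2_mul -mk2_1; apply: mk2_eq; ring.
  rewrite !mk2_mul; apply: mk2_eq; ring.
by apply: base_c; rewrite subr_eq0.
Qed.

End PartH.


Section PartI.
Variable F : fieldType.
Hypothesis hF : infinite_type F.

Lemma claim_all m : forall M : 'M[F]_m.+2, nsc M -> forall b, claimP M b.
Proof.
elim: m => [|m IH] M hn b.
  exact: (claim2 hF b hn).
pose M' : 'M[F]_(1 + m.+2) := M.
have EM : M = block_mx (ulsubmx M') (ursubmx M') (dlsubmx M') (drsubmx M') by rewrite submxK.
rewrite EM in hn *.
have [a [r [c [A1 [hs [hA1 hcr]]]]]] := step_conj hn.
apply: (claim_sim hs).
case: hcr => [hc|hr].
  exact: (claim_block _ _ hc (IH A1 hA1 (b - 1))).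
apply: claim_tr; rewrite tr_block_mx.
have hrt : r^T != 0.
  by apply: contra hr => /eqP h; apply/eqP; rewrite -[r]trmxK h trmx0.
exact: (claim_block _ _ hrt (IH A1^T (nsc_tr hA1) (b - 1))).
Qed.

End PartI.

Unset Implicit Arguments.

Theorem theorem4p2 (F : fieldType) (n : nat) (p : {poly F})
  (hF : infinite_type F) (hn : (1 < n)%N) (hp : (1 < size p)%N) :
  forall M : 'M[F]_n, exists X Y : 'M[F]_n,
    in_p_commutators p X /\ in_p_commutators p Y /\ M = X *m Y.
Proof.
case: n hn => [|[|m]] // _ M.
have [c hc] := distinct_pvals hF m.+2 hp.
have hZ := zd_S hc.
have hS : forall X : 'M[F]_m.+2, \tr X = 0 -> nsc X -> in_p_commutators p X.
  move=> X htr hX.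
  have [B [[G [Gi [hG EB]]] hB]] := fillmore htr (or_intror hX).
  have -> : X = Gi *m B *m G.
    by case: hG => h1 h2; rewrite EB !mulmxA h2 mul1mx -mulmxA h2 mulmx1.
  by apply: S_conj; [exact: conjb_swap | exact: hZ].
have [/is_scalar_mxP [s ->]|hns] := boolP (is_scalar_mx M).
  pose P := perm_mx (perm (@ordS_inj m.+2)) : 'M[F]_m.+2.
  have hP : forall i, P i i = 0.
    move=> i; rewrite /P /perm_mx !mxE permE.
    case: eqP => // /(f_equal val) /=.
    case: (ltnP i.+1 m.+2) => hi; first by rewrite modn_small // => /eqP; rewrite eqn_leq ltnn.
    have -> : i.+1 = m.+2 by apply/eqP; rewrite eqn_leq hi ltn_ord.
    by rewrite modnn => e; move: hi; rewrite -e.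
  exists P, (s *: P^T); split; first exact: hZ.
  split; first by apply: hZ => i; rewrite mxE mxE hP mulr0.
  rewrite -scalemxAr /P tr_perm_mx -perm_mxM mulgV perm_mx1.
  by rewrite scalemx1.
have hnsc : nsc M by move=> t ht; move: hns; rewrite ht; apply/negP/negPn/is_scalar_mxP; exists t.
have [X [Xi [[XXi XiX] [h1 [h2 [h3 h4]]]]]] := claim_all hF hnsc 0.
exists X, (Xi *m M); split; first exact: hS.
split; first exact: hS.
by rewrite mulmxA XXi mul1mx.
Qed.
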